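(* Let $t,s$ be two trees of $\mathcal{A}$ different from $|$, with $k$ and $l$ as below. Then $$t\prec s=\sum_{\substack{\sigma\in\mathrm{QSh}(k,l)\\ \sigma^{-1}(1)=\{1\}}}\sigma(t,s),\qquad t\cdot s=\sum_{\substack{\sigma\in\mathrm{QSh}(k,l)\\ \sigma^{-1}(1)=\{1,k+1\}}}\sigma(t,s),\qquad t\succ s=\sum_{\substack{\sigma\in\mathrm{QSh}(k,l)\\ \sigma^{-1}(1)=\{k+1\}}}\sigma(t,s).$$
   Context: Trees: planar rooted trees in which every internal vertex has at least two children; the root vertex hangs from a trunk edge; leaves are edges without upper vertex; $|$ is the one-leaf tree. $\mathcal A$ is the $\mathbb K$-vector space with basis these trees, with products defined recursively: $x_0\vee\cdots\vee x_k$ ($k\ge1$) grafts trees left to right on a new root vertex; for $x=x^{(0)}\vee\cdots\vee x^{(k)}$, $y=y^{(0)}\vee\cdots\vee y^{(l)}$: $x\prec y=x^{(0)}\vee\cdots\vee x^{(k-1)}\vee(x^{(k)}*y)$, $x\cdot y=x^{(0)}\vee\cdots\vee x^{(k-1)}\vee(x^{(k)}*y^{(0)})\vee y^{(1)}\vee\cdots\vee y^{(l)}$, $x\succ y=(x*y^{(0)})\vee y^{(1)}\vee\cdots\vee y^{(l)}$, with $*=\prec+\cdot+\succ$ and $|*z=z*|=z$. A $(k,l)$-quasi-shuffle is a surjection $\sigma:\{1,\dots,k+l\}\to\{1,\dots,n\}$ with $\sigma(1)<\cdots<\sigma(k)$ and $\sigma(k+1)<\cdots<\sigma(k+l)$;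 $\mathrm{QSh}(k,l)$ is their set. Let $v_1,\dots,v_k$ be the internal vertices (from the root up) on the right-most branch of $t$ (path from the root always to the right-most child), and $F_i$ the forest of subtrees at the children of $v_i$ other than the right-most one; let $w_1,\dots,w_l$ be the internal vertices on the left-most branch of $s$ and $F_{k+j}$ the forest of subtrees at the children of $w_j$ other than the left-most one. $\sigma(t,s)$ is the tree with a ladder of internal vertices $u_1$ (root),$\dots,u_n$ ($u_{p+1}$ child of $u_p$, ladder child of $u_n$ a leaf), the children of $u_p$ being from left to right: the trees of $F_i$ if $\sigma(i)=p$ ($i\le k$), the ladder child, the trees of $F_{k+j}$ if $\sigma(k+j)=p$. *)

(* Defs.v *)
From HB Require Import structures.
From mathcomp Require Import all_boot all_algebra.
Set Implicit Arguments. Unset Strict Implicit. Unset Printing Implicit Defensive.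
Import GRing.Theory.
Local Open Scope ring_scope.

(* Planar rooted trees: [Leaf] is the one-leaf tree |, [Node xs] is
   xs_0 \/ ... \/ xs_k (grafting left to right on a new root). *)
Inductive tree : Type := Leaf | Node of seq tree.

Fixpoint wf (t : tree) : bool :=
  match t with Leaf => true | Node xs => (1 < size xs)%N && all wf xs end.

Fixpoint tsize (t : tree) : nat :=
  match t with Leaf => 1 | Node xs => (sumn (map tsize xs)).+1%N end.

Fixpoint tree_enc (t : tree) : GenTree.tree unit :=
  match t with
  | Leaf => GenTree.Node 0 [::]
  | Node xs => GenTree.Node 1 (map tree_enc xs)
  end.
Fixpoint tree_dec (g : GenTree.tree unit) : option tree :=
  match g with
  | GenTree.Leaf _ => None
  | GenTree.Node 0 _ => Some Leaf
  | GenTree.Node _ gs => Some (Node (pmap tree_dec gs))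
  end.
Fixpoint tree_encK (t : tree) : tree_dec (tree_enc t) = Some t :=
  match t return tree_dec (tree_enc t) = Some t with
  | Leaf => erefl
  | Node xs =>
    let fix aux (l : seq tree) : pmap tree_dec (map tree_enc l) = l :=
      match l return pmap tree_dec (map tree_enc l) = l with
      | [::] => erefl
      | x :: l' =>
        @eq_ind_r _ (Some x) (fun o => oapp (cons^~ (pmap tree_dec (map tree_enc l'))) (pmap tree_dec (map tree_enc l')) o = x :: l')
          (f_equal (cons x) (aux l')) _ (tree_encK x)
      end in
    f_equal (fun l => Some (Node l)) (aux xs)
  end.
HB.instance Definition _ := Countable.copy tree (pcan_type tree_encK).

Definition rlast (xs : seq tree) : tree := last Leaf xs.
Definition rinit (xs : seq tree) : seq tree := take (size xs).-1 xs.

(* The products, computed on basis trees; the result is a formal sum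
   of trees (with multiplicity) represented as a list.  [star_f] uses a
   fuel argument; the fuel [tsize x + tsize y] is always sufficient
   since every recursive call strictly decreases tsize x + tsize y. *)
Fixpoint star_f (n : nat) (x y : tree) {struct n} : seq tree :=
  match n with
  | 0 => [::]
  | n'.+1 =>
    match x, y with
    | Leaf, _ => [:: y]
    | _, Leaf => [:: x]
    | Node xs, Node ys =>
      [seq Node (rcons (rinit xs) z) | z <- star_f n' (rlast xs) y]
      ++ [seq Node (rinit xs ++ z :: behead ys) | z <- star_f n' (rlast xs) (head Leaf ys)]
      ++ [seq Node (z :: behead ys) | z <- star_f n' x (head Leaf ys)]
    end
  end.

Definition star (x y : tree) : seq tree := star_f (tsize x + tsize y)%N x y.

Definition prec (x y : tree) : seq tree :=
  match x with
  | Leaf => [::]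
  | Node xs => [seq Node (rcons (rinit xs) z) | z <- star (rlast xs) y]
  end.
Definition dot (x y : tree) : seq tree :=
  match x, y with
  | Node xs, Node ys =>
    [seq Node (rinit xs ++ z :: behead ys) | z <- star (rlast xs) (head Leaf ys)]
  | _, _ => [::]
  end.
Definition succ (x y : tree) : seq tree :=
  match y with
  | Leaf => [::]
  | Node ys => [seq Node (z :: behead ys) | z <- star x (head Leaf ys)]
  end.

(* Forests F_1, ..., F_k along the right-most branch of t (from the root up) *)
Fixpoint rforests_f (n : nat) (t : tree) : seq (seq tree) :=
  match n with
  | 0 => [::]
  | n'.+1 =>
    match t with
    | Leaf => [::]
    | Node xs => rinit xs :: rforests_f n' (rlast xs)
    end
  end.
Definition rforests (t : tree) : seq (seq tree) := rforests_f (tsize t) t.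

(* Forests F_{k+1}, ..., F_{k+l} along the left-most branch of s *)
Fixpoint lforests (s : tree) : seq (seq tree) :=
  match s with
  | Leaf => [::]
  | Node ys =>
    match ys with
    | [::] => [::]
    | y0 :: yr => yr :: lforests y0
    end
  end.

(* (k,l)-quasi-shuffles, 0-indexed: sigma : {0..k+l-1} -> {0..n-1},
   surjective, strictly increasing on {0..k-1} and on {k..k+l-1}. *)
Definition is_qsh (k l n : nat) (sigma : {ffun 'I_(k + l) -> 'I_n}) : bool :=
  [forall p : 'I_n, exists i : 'I_(k + l), sigma i == p]
  && [forall i : 'I_(k + l), forall j : 'I_(k + l),
        ((i < j)%N && (j < k)%N) ==> (sigma i < sigma j)%N]
  && [forall i : 'I_(k + l), forall j : 'I_(k + l),
        ((k <= i)%N && (i < j)%N) ==> (sigma i < sigma j)%N].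

Section SigmaTree.
Variables (k l n : nat) (sigma : {ffun 'I_(k + l) -> 'I_n}) (Ft Fs : seq (seq tree)).

Definition sigL (p : nat) : seq tree :=
  flatten [seq nth [::] Ft i | i : 'I_(k + l) <- enum 'I_(k + l) & (i < k)%N && (val (sigma i) == p)].
Definition sigR (p : nat) : seq tree :=
  flatten [seq nth [::] Fs (i - k)%N | i : 'I_(k + l) <- enum 'I_(k + l) & (k <= i)%N && (val (sigma i) == p)].

Fixpoint ladder (m p : nat) : tree :=
  match m with
  | 0 => Leaf
  | m'.+1 => Node (sigL p ++ ladder m' p.+1 :: sigR p)
  end.
End SigmaTree.

Definition sigma_tree (k l n : nat) (sigma : {ffun 'I_(k + l) -> 'I_n}) (t s : tree) : tree :=
  ladder sigma (rforests t) (lforests s) n 0.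

(* Elements of the K-vector space A with basis the trees are represented by
   their coefficient functions tree -> K; [vec ts] is the element
   sum_{u in ts} u of A. *)
Definition vec (K : fieldType) (ts : seq tree) : tree -> K :=
  fun u => (count_mem u ts)%:R.

(* sum over sigma in QSh(k,l) with sigma^{-1}(0) = S (0-indexed) of sigma(t,s) *)
Definition qsh_sum (K : fieldType) (t s : tree) (P : nat -> bool) : tree -> K :=
  fun u =>
    let k := size (rforests t) in
    let l := size (lforests s) in
    \sum_(n < (k + l).+1)
      \sum_(sigma : {ffun 'I_(k + l) -> 'I_n} |
              is_qsh sigma && [forall i : 'I_(k + l), (val (sigma i) == 0) == P (val i)])
        (sigma_tree sigma t s == u)%:R.

(* Main.v *)
From Pilot Require Import Defs.
From mathcomp Require Import all_boot all_algebra.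
From mathcomp Require Import zify.
From Stdlib Require Import FunctionalExtensionality.
Import Pilot.Defs.
Set Implicit Arguments. Unset Strict Implicit. Unset Printing Implicit Defensive.
Import GRing.Theory.

Definition letter := (bool * bool)%type.
Definition lL : letter := (true, false).
Definition lR : letter := (false, true).
Definition lB : letter := (true, true).

Fixpoint words (k : nat) : nat -> seq (seq letter) :=
  match k with
  | 0 => fun l => [:: nseq l lR]
  | k'.+1 => fix wl (l : nat) : seq (seq letter) :=
      match l with
      | 0 => map (cons lL) (words k' 0)
      | l'.+1 => map (cons lL) (words k' l'.+1) ++ map (cons lB) (words k' l')
                 ++ map (cons lR) (wl l')
      end
  end.

Lemma wordsSS k l : words k.+1 l.+1 =
  map (cons lL) (words k l.+1) ++ map (cons lB) (words k l) ++ map (cons lR) (words k.+1 l).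
Proof. by []. Qed.
Lemma wordsS0 k : words k.+1 0 = map (cons lL) (words k 0).
Proof. by []. Qed.
Lemma words0 l : words 0 l = [:: nseq l lR].
Proof. by []. Qed.
Lemma words_k0 k : words k 0 = [:: nseq k lL].
Proof. by elim: k => // k IH; rewrite wordsS0 IH. Qed.

Definition posL (w : seq letter) : seq nat :=
  [seq p <- iota 0 (size w) | (nth (false, false) w p).1].
Definition posR (w : seq letter) : seq nat :=
  [seq p <- iota 0 (size w) | (nth (false, false) w p).2].

Lemma posL_cons a w : posL (a :: w) = (if a.1 then [:: 0] else [::]) ++ map succn (posL w).
Proof.
rewrite /posL /= -add1n iotaDl filter_map /=.
by case: a.1 => /=; [congr (_ :: _)|]; apply: eq_map => x; rewrite add1n.
Qed.
Lemma posR_cons a w : posR (a :: w) = (if a.2 then [:: 0] else [::]) ++ map succn (posR w).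
Proof.
rewrite /posR /= -add1n iotaDl filter_map /=.
by case: a.2 => /=; [congr (_ :: _)|]; apply: eq_map => x; rewrite add1n.
Qed.

Definition LLf (w : seq letter) (Ft : seq (seq tree)) (p : nat) : seq tree :=
  if p \in posL w then nth [::] Ft (index p (posL w)) else [::].
Definition RRf (w : seq letter) (Fs : seq (seq tree)) (p : nat) : seq tree :=
  if p \in posR w then nth [::] Fs (index p (posR w)) else [::].

Fixpoint lad (L R : nat -> seq tree) (m p : nat) : tree :=
  match m with 0 => Leaf | m'.+1 => Node (L p ++ lad L R m' p.+1 :: R p) end.

Lemma lad_ext L R L' R' m p : (forall q, L q = L' q) -> (forall q, R q = R' q) ->
  lad L R m p = lad L' R' m p.
Proof. by move=> HL HR; elim: m p => //= m IH p; rewrite HL HR IH. Qed.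

Lemma lad_shift L R m p :
  lad L R m p.+1 = lad (fun q => L q.+1) (fun q => R q.+1) m p.
Proof. by elim: m p => //= m IH p; rewrite IH. Qed.

Definition wtree (w : seq letter) Ft Fs : tree := lad (LLf w Ft) (RRf w Fs) (size w) 0.

Lemma LLf_cons0 a w Ft : LLf (a :: w) Ft 0 = if a.1 then head [::] Ft else [::].
Proof.
rewrite /LLf posL_cons; case: a.1 => /=; first by rewrite ?in_cons ?eqxx /=; case: Ft.
by case: ifP => // /mapP [].
Qed.
Lemma RRf_cons0 a w Fs : RRf (a :: w) Fs 0 = if a.2 then head [::] Fs else [::].
Proof.
rewrite /RRf posR_cons; case: a.2 => /=; first by rewrite ?in_cons ?eqxx /=; case: Fs.
by case: ifP => // /mapP [].
Qed.
Lemma LLf_consS a w Ft p :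
  LLf (a :: w) Ft p.+1 = LLf w (if a.1 then behead Ft else Ft) p.
Proof.
rewrite /LLf posL_cons; have inj : injective succn by move=> x y [].
case: a.1 => /=; rewrite ?in_cons /= (mem_map inj) ?index_map //.
by case: ifP => // _; rewrite nth_behead.
Qed.
Lemma RRf_consS a w Fs p :
  RRf (a :: w) Fs p.+1 = RRf w (if a.2 then behead Fs else Fs) p.
Proof.
rewrite /RRf posR_cons; have inj : injective succn by move=> x y [].
case: a.2 => /=; rewrite ?in_cons /= (mem_map inj) ?index_map //.
by case: ifP => // _; rewrite nth_behead.
Qed.

Lemma wtree_cons a w Ft Fs : wtree (a :: w) Ft Fs =
  Node ((if a.1 then head [::] Ft else [::])
        ++ wtree w (if a.1 then behead Ft else Ft) (if a.2 then behead Fs else Fs)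
        :: (if a.2 then head [::] Fs else [::])).
Proof.
rewrite /wtree /= LLf_cons0 RRf_cons0; congr (Node (_ ++ _ :: _)).
by rewrite lad_shift; apply: lad_ext => q; rewrite ?LLf_consS ?RRf_consS.
Qed.

Lemma rforests_f_Leaf n : rforests_f n Leaf = [::].
Proof. by case: n. Qed.
Lemma tsize_gt0 t : 0 < tsize t.
Proof. by case: t. Qed.
Lemma tsize_mem x xs : x \in xs -> tsize x <= sumn (map tsize xs).
Proof.
elim: xs => //= y xs IH; rewrite in_cons => /orP [/eqP -> | /IH]; first exact: leq_addr.
by move=> H; apply: leq_trans H (leq_addl _ _).
Qed.
Lemma rlast_mem xs : xs != [::] -> rlast xs \in xs.
Proof. by case: xs => // x xs _; rewrite /rlast /=; apply: mem_last. Qed.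
Lemma tsize_rlast xs : xs != [::] -> tsize (rlast xs) < tsize (Node xs).
Proof. by move/rlast_mem/tsize_mem. Qed.
Lemma tsize_head ys : ys != [::] -> tsize (head Leaf ys) < tsize (Node ys).
Proof. by case: ys => // y ys _ /=; rewrite ltnS leq_addr. Qed.

Lemma rforests_fuel n m t : tsize t <= n -> tsize t <= m -> rforests_f n t = rforests_f m t.
Proof.
elim: n m t => [|n IH] [|m] t; try by case: t.
case: t => //= xs Hn Hm; congr (_ :: _).
case: (xs =P [::]) => [->|/eqP xn0]; first by rewrite /rlast /= !rforests_f_Leaf.
have := tsize_rlast xn0 => /= H.
by apply: IH; rewrite -ltnS; apply: leq_trans H _.
Qed.

Lemma rforests_Leaf : rforests Leaf = [::].
Proof. by []. Qed.
Lemma rforests_Node xs : xs != [::] -> rforests (Node xs) = rinit xs :: rforests (rlast xs).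
Proof.
move=> xn0; rewrite /rforests /=; congr (_ :: _); apply: rforests_fuel => //.
by have := tsize_rlast xn0; rewrite /= ltnS.
Qed.
Lemma lforests_Node ys : ys != [::] -> lforests (Node ys) = behead ys :: lforests (head Leaf ys).
Proof. by case: ys. Qed.
Lemma node_split xs : xs != [::] -> rinit xs ++ [:: rlast xs] = xs.
Proof.
case/lastP: xs => // b y _; rewrite /rinit /rlast size_rcons /= last_rcons.
by rewrite -cats1 take_size_cat.
Qed.
Lemma wf_Node xs : wf (Node xs) -> xs != [::] /\ all wf xs.
Proof. by case: xs => //= x xs /andP []. Qed.

Lemma recon_s n s : tsize s <= n -> wf s ->
  wtree (nseq (size (lforests s)) lR) [::] (lforests s) = s.
Proof.
elim: n s => [|n IH] s; first by case: s.
case: s => // ys Hs /wf_Node [yn0 Hw]; rewrite lforests_Node //= wtree_cons /=.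
rewrite IH; first by case: ys yn0 {Hs Hw}.
  by rewrite -ltnS; apply: leq_trans (tsize_head yn0) Hs.
by case: ys yn0 Hw {Hs} => //= y ys _ /andP [].
Qed.

Lemma recon_t n t : tsize t <= n -> wf t ->
  wtree (nseq (size (rforests t)) lL) (rforests t) [::] = t.
Proof.
elim: n t => [|n IH] t; first by case: t.
case: t => // xs Hs /wf_Node [xn0 Hw]; rewrite rforests_Node //= wtree_cons /=.
rewrite IH; first by rewrite cats1 -cats1 node_split.
  by rewrite -ltnS; apply: leq_trans (tsize_rlast xn0) Hs.
by apply: (allP Hw); apply: rlast_mem.
Qed.

Lemma star_words n t s : tsize t + tsize s <= n -> wf t -> wf s ->
  star_f n t s = [seq wtree w (rforests t) (lforests s) | w <- words (size (rforests t)) (size (lforests s))].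
Proof.
elim: n t s => [|n IH] t s; first by case: t.
case: t => [|xs] Hn Ht Hs.
  by rewrite /= (recon_s (leqnn _) Hs).
case: s Hn Hs => [|ys] Hn Hs.
  by rewrite /= words_k0 /= (recon_t (leqnn _) Ht).
have [xn0 Hwx] := wf_Node Ht; have [yn0 Hwy] := wf_Node Hs.
have Hwl : wf (rlast xs) by apply: (allP Hwx); apply: rlast_mem.
have Hwh : wf (head Leaf ys) by case: ys yn0 Hwy {Hs Hn} => //= y ys _ /andP [].
have Hl := tsize_rlast xn0; have Hh := tsize_head yn0.
rewrite rforests_Node // lforests_Node // [size (_ :: rforests _)]/= [size (_ :: lforests _)]/= wordsSS.
rewrite [star_f _ _ _]/= (IH (rlast xs) (Node ys)) ?(IH (rlast xs) (head Leaf ys)) ?(IH (Node xs) (head Leaf ys)) //;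
  try by [lia].
rewrite rforests_Node // lforests_Node // [size (_ :: rforests _)]/= [size (_ :: lforests _)]/= !map_cat -!map_comp.
congr (_ ++ _ ++ _); apply: eq_map => w /=; rewrite wtree_cons //=.
by rewrite cats1.
Qed.

Definition wordP k l (w : seq letter) :=
  [&& all (fun a : letter => a.1 || a.2) w,
      count (fun a : letter => a.1) w == k & count (fun a : letter => a.2) w == l].

Lemma mem_cons_map (c a : letter) w W : (a :: w \in map (cons c) W) = (a == c) && (w \in W).
Proof.
apply/mapP/andP => [[w' Hw' [-> ->]] // | [/eqP -> H]]; by exists w.
Qed.

Lemma nil_map_cons (c : letter) W : ([::] \in map (cons c) W) = false.
Proof. by apply/negbTE/mapP => -[]. Qed.

Lemma wordP_cons k l (a : letter) w : wordP k l (a :: w) =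
  [&& a.1 || a.2, (a.1 <= k) && (a.2 <= l) & wordP (k - a.1) (l - a.2) w].
Proof.
rewrite /wordP /=; case: a => [[] []] /=; case: k => [|k]; case: l => [|l];
  rewrite /= ?add0n ?subn0 ?subSS ?subn1 ?eqSS ?andbF //; rewrite -?[k - _]/(k - 0) -?[l - _]/(l - 0) !subn0 //.
Qed.

Lemma mem_words k l w : (w \in words k l) = wordP k l w.
Proof.
elim: k l w => [|k IHk] l w.
  rewrite words0 inE; elim: w l => [|a w IH] [|l] //=.
  all: try by [].
  - by rewrite wordP_cons; case: a => [[] []].
  - rewrite eqseq_cons IH wordP_cons; case: a => [[] []] //=.
    by rewrite subn0 subSS subn0.

elim: l w => [|l IHl] w.
  rewrite wordsS0; case: w => [|a w]; first by rewrite nil_map_cons.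
  rewrite mem_cons_map wordP_cons IHk; case: a => [[] []] //=.
  by rewrite subSS !subn0.
rewrite wordsSS !mem_cat; case: w => [|a w]; first by rewrite !nil_map_cons.
rewrite !mem_cons_map wordP_cons IHk IHk IHl.
by case: a => [[] []] //=; rewrite ?orbF ?subSS ?subn0.
Qed.

Lemma uniq_map_cons (c : letter) W : uniq (map (cons c) W) = uniq W.
Proof. by apply: map_inj_uniq => x y []. Qed.

Lemma words_uniq k l : uniq (words k l).
Proof.
elim: k l => [|k IHk] l; first by [].
elim: l => [|l IHl]; first by rewrite wordsS0 uniq_map_cons.
rewrite wordsSS !cat_uniq !uniq_map_cons IHk IHk IHl /= !andbT.
apply/andP; split; [rewrite has_cat; apply/norP; split|];
  apply/hasPn => x /mapP [y _ ->]; by rewrite mem_cons_map.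
Qed.

Lemma wordP_size k l w : wordP k l w -> k <= size w <= k + l.
Proof.
case/and3P => Ha /eqP Hk /eqP Hl; rewrite -Hk -Hl count_size /=.
have := count_predUI (fun a : letter => a.1) (fun a : letter => a.2) w.
move: Ha; rewrite all_count => /eqP Hs.
have -> : count (predU (fun a : letter => a.1) (fun a : letter => a.2)) w = size w by rewrite -Hs.
lia.
Qed.

Lemma posL_mem p w : (p \in posL w) = (p < size w) && (nth (false, false) w p).1.
Proof. by rewrite /posL mem_filter mem_iota add0n andbC. Qed.
Lemma posR_mem p w : (p \in posR w) = (p < size w) && (nth (false, false) w p).2.
Proof. by rewrite /posR mem_filter mem_iota add0n andbC. Qed.
Lemma posL_sorted w : sorted ltn (posL w).
Proof. apply: sorted_filter; [exact: ltn_trans | exact: iota_ltn_sorted]. Qed.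
Lemma posR_sorted w : sorted ltn (posR w).
Proof. apply: sorted_filter; [exact: ltn_trans | exact: iota_ltn_sorted]. Qed.
Lemma posL_uniq w : uniq (posL w).
Proof. exact: filter_uniq (iota_uniq _ _). Qed.
Lemma posR_uniq w : uniq (posR w).
Proof. exact: filter_uniq (iota_uniq _ _). Qed.
Lemma posL_size w : size (posL w) = count (fun a : letter => a.1) w.
Proof.
by rewrite size_filter -[in RHS](mkseq_nth (false, false) w) /mkseq count_map.
Qed.
Lemma posR_size w : size (posR w) = count (fun a : letter => a.2) w.
Proof.
by rewrite size_filter -[in RHS](mkseq_nth (false, false) w) /mkseq count_map.
Qed.
Lemma posL_lt w : all (fun p => p < size w) (posL w).
Proof. by apply/allP => p; rewrite posL_mem => /andP []. Qed.
Lemma posR_lt w : all (fun p => p < size w) (posR w).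
Proof. by apply/allP => p; rewrite posR_mem => /andP []. Qed.
Lemma nth_lt s j N : all (fun p => p < N.+1) s -> nth 0 s j < N.+1.
Proof.
move=> /allP H; case: (ltnP j (size s)) => Hj; first by apply: H; apply: mem_nth.
by rewrite nth_default.
Qed.

Section Bij.
Variables k l n' : nat.

Lemma qshP N (sigma : {ffun 'I_(k + l) -> 'I_N}) : is_qsh sigma <->
  [/\ forall p, exists i, sigma i = p,
      forall i j : 'I_(k + l), i < j -> j < k -> sigma i < sigma j &
      forall i j : 'I_(k + l), k <= i -> i < j -> sigma i < sigma j].
Proof.
split.
  case/andP => /andP [/forallP H1 /forallP H2] /forallP H3; split.
  - by move=> p; case/existsP: (H1 p) => i /eqP; exists i.
  - by move=> i j Hij Hj; have /forallP/(_ j) := H2 i; rewrite Hij Hj.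
  - by move=> i j Hi Hij; have /forallP/(_ j) := H3 i; rewrite Hij Hi.
case=> H1 H2 H3; apply/andP; split; [apply/andP; split|].
- by apply/forallP => p; case: (H1 p) => i Hi; apply/existsP; exists i; rewrite Hi.
- apply/forallP => i; apply/forallP => j; apply/implyP => /andP [? ?]; exact: H2.
- apply/forallP => i; apply/forallP => j; apply/implyP => /andP [? ?]; exact: H3.
Qed.

Definition hf (w : seq letter) : {ffun 'I_(k + l) -> 'I_n'.+1} :=
  [ffun i : 'I_(k + l) => inord (if i < k then nth 0 (posL w) i else nth 0 (posR w) (i - k))].

Lemma hf_val w i : size w = n'.+1 ->
  val (hf w i) = if i < k then nth 0 (posL w) i else nth 0 (posR w) (i - k).
Proof.
move=> Hs; rewrite ffunE /= inordK //; case: ifP => _; apply: nth_lt; rewrite -Hs.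
  exact: posL_lt. exact: posR_lt.
Qed.


Lemma hf_qsh w : wordP k l w -> size w = n'.+1 -> is_qsh (hf w).
Proof.
move=> /and3P [Ha /eqP Hk /eqP Hl] Hs; apply/qshP; split.
- move=> p; have Hp : (p : nat) < size w by rewrite Hs.
  have : (nth (false, false) w p).1 || (nth (false, false) w p).2.
    by apply: (allP Ha); apply: mem_nth.
  case/orP => H.
  + have Hin : (p : nat) \in posL w by rewrite posL_mem Hp.
    have Hj : index (p : nat) (posL w) < k by rewrite -Hk -posL_size index_mem.
    have Hj' : index (p : nat) (posL w) < k + l by apply: leq_trans Hj (leq_addr _ _).
    by exists (Ordinal Hj'); apply: val_inj; rewrite hf_val //= Hj nth_index.
  + have Hin : (p : nat) \in posR w by rewrite posR_mem Hp.
    have Hj : index (p : nat) (posR w) < l by rewrite -Hl -posR_size index_mem.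
    have Hj' : k + index (p : nat) (posR w) < k + l by rewrite ltn_add2l.
    exists (Ordinal Hj'); apply: val_inj; rewrite hf_val //=.
    by rewrite ltnNge leq_addr /= addKn nth_index.
- move=> i j Hij Hjk; rewrite !hf_val // Hjk (ltn_trans Hij Hjk).
  apply: (sorted_ltn_nth ltn_trans 0 (posL_sorted w)) => //; rewrite inE posL_size Hk //.
  exact: ltn_trans Hij Hjk.
- move=> i j Hi Hij; rewrite !hf_val //.
  have -> : (i < k) = false by rewrite ltnNge Hi.
  have -> : (j < k) = false by rewrite ltnNge (leq_trans Hi (ltnW Hij)).
  have := ltn_ord i; have := ltn_ord j => Hj Hi'.
  apply: (sorted_ltn_nth ltn_trans 0 (posR_sorted w)); rewrite ?inE ?posR_size ?Hl; lia.
Qed.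

Lemma Zchar N (P : nat -> bool) (sigma : {ffun 'I_(k + l) -> 'I_N}) (H0 : 0 < k + l)
  (Hk' : k < k + l) : is_qsh sigma -> (forall i, i != 0 -> i != k -> P i = false) ->
  [forall i, (val (sigma i) == 0) == P (val i)] =
  ((val (sigma (Ordinal H0)) == 0) == P 0) && ((val (sigma (Ordinal Hk')) == 0) == P k).
Proof.
move=> /qshP [_ H2 H3] HP; apply/forallP/andP.
  by move=> H; split; [exact: (H (Ordinal H0)) | exact: (H (Ordinal Hk'))].
case=> A B i; case: (eqVneq (val i) 0) => [Hi0|Hi0].
  by have -> : i = Ordinal H0 by apply: val_inj.
case: (eqVneq (val i) k) => [Hik|Hik].
  by have -> : i = Ordinal Hk' by apply: val_inj.
rewrite HP // (_ : (val (sigma i) == 0) = false) //; apply/negbTE; rewrite -lt0n.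
case: (ltnP i k) => Hik'.
  by apply: leq_ltn_trans (leq0n _) (H2 (Ordinal H0) i _ Hik'); rewrite /= lt0n.
have Hki : k < i by rewrite ltn_neqAle eq_sym Hik Hik'.
exact: leq_ltn_trans (leq0n _) (H3 (Ordinal Hk') i (leqnn k) Hki).
Qed.

Lemma hf_head w (H0 : 0 < k + l) (Hk' : k < k + l) : 0 < k -> 0 < l ->
  wordP k l w -> size w = n'.+1 ->
  (val (hf w (Ordinal H0)) == 0) = (nth (false, false) w 0).1 /\
  (val (hf w (Ordinal Hk')) == 0) = (nth (false, false) w 0).2.
Proof.
move=> hk hl /and3P [_ /eqP Hk /eqP Hl] Hs; rewrite !hf_val //= hk ltnn subnn.
case: w Hs Hk Hl => // a w _ /= Hk Hl; rewrite posL_cons posR_cons.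
split.
  case: a.1 Hk => //= Hk; rewrite (nth_map 0) // posL_size; lia.
case: a.2 Hl => //= Hl; rewrite (nth_map 0) // posR_size; lia.
Qed.

Lemma ladder_lad (sigma : {ffun 'I_(k + l) -> 'I_n'.+1}) Ft Fs m p :
  ladder sigma Ft Fs m p = lad (sigL sigma Ft) (sigR sigma Fs) m p.
Proof. by elim: m p => //= m IH p; rewrite IH. Qed.

Lemma sigL_hf w Ft p : wordP k l w -> size w = n'.+1 -> sigL (hf w) Ft p = LLf w Ft p.
Proof.
move=> /and3P [_ /eqP Hk _] Hs; rewrite /sigL /LLf; case: ifP => Hin.
  have Hj : index p (posL w) < k by rewrite -Hk -posL_size index_mem.
  have Hj' : index p (posL w) < k + l by apply: leq_trans Hj (leq_addr _ _).
  rewrite (eq_filter (a2 := pred1 (Ordinal Hj'))); last first.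
    move=> i /=; rewrite hf_val //; apply/andP/eqP => [[Hik /eqP Hn]|->].
      rewrite Hik in Hn.
      apply: val_inj => /=; rewrite -Hn index_uniq ?posL_uniq // posL_size Hk //.
    by rewrite /= Hj nth_index.
  by rewrite filter_pred1_uniq ?enum_uniq ?mem_enum //= cats0.
rewrite (eq_filter (a2 := pred0)) ?filter_pred0 //.
move=> i /=; rewrite hf_val //; apply/negbTE/andP => -[Hik /eqP Hn].
by move: Hin; rewrite -Hn Hik mem_nth // posL_size Hk.
Qed.

Lemma sigR_hf w Fs p : wordP k l w -> size w = n'.+1 -> sigR (hf w) Fs p = RRf w Fs p.
Proof.
move=> /and3P [_ _ /eqP Hl] Hs; rewrite /sigR /RRf; case: ifP => Hin.
  have Hj : index p (posR w) < l by rewrite -Hl -posR_size index_mem.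
  have Hj' : k + index p (posR w) < k + l by rewrite ltn_add2l.
  rewrite (eq_filter (a2 := pred1 (Ordinal Hj'))); last first.
    move=> i /=; rewrite hf_val //; apply/andP/eqP => [[Hik /eqP Hn]|->].
      rewrite ltnNge Hik /= in Hn.
      apply: val_inj => /=; rewrite -Hn index_uniq ?posR_uniq ?subnKC //.
      rewrite posR_size Hl; have := ltn_ord i; lia.
    by rewrite /= leq_addr ltnNge leq_addr /= addKn nth_index.
  by rewrite filter_pred1_uniq ?enum_uniq ?mem_enum //= cats0 addKn.
rewrite (eq_filter (a2 := pred0)) ?filter_pred0 //.
move=> i /=; rewrite hf_val //; apply/negbTE/andP => -[Hik /eqP Hn].
move: Hin; rewrite -Hn ltnNge Hik mem_nth // posR_size Hl; have := ltn_ord i; lia.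
Qed.

Lemma ladder_hf w Ft Fs : wordP k l w -> size w = n'.+1 ->
  ladder (hf w) Ft Fs n'.+1 0 = wtree w Ft Fs.
Proof.
move=> Hw Hs; rewrite ladder_lad /wtree Hs; apply: lad_ext => q.
  exact: sigL_hf. exact: sigR_hf.
Qed.

Lemma hf_inj w1 w2 : wordP k l w1 -> wordP k l w2 -> size w1 = n'.+1 -> size w2 = n'.+1 ->
  hf w1 = hf w2 -> w1 = w2.
Proof.
move=> /and3P[_ /eqP k1 /eqP l1] /and3P[_ /eqP k2 /eqP l2] s1 s2 E.
have EL : posL w1 = posL w2.
  apply: (eq_from_nth (x0 := 0)); first by rewrite !posL_size k1 k2.
  move=> j; rewrite posL_size k1 => Hj.
  have Hj' : j < k + l by apply: leq_trans Hj (leq_addr _ _).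
  by have := congr1 (fun f : {ffun 'I_(k + l) -> 'I_n'.+1} => val (f (Ordinal Hj'))) E; rewrite /= !hf_val //= Hj.
have ER : posR w1 = posR w2.
  apply: (eq_from_nth (x0 := 0)); first by rewrite !posR_size l1 l2.
  move=> j; rewrite posR_size l1 => Hj.
  have Hj' : k + j < k + l by rewrite ltn_add2l.
  have := congr1 (fun f : {ffun 'I_(k + l) -> 'I_n'.+1} => val (f (Ordinal Hj'))) E; rewrite /= !hf_val //=.
  by rewrite ltnNge leq_addr /= addKn.
apply: (eq_from_nth (x0 := (false, false))); first by rewrite s1 s2.
move=> p Hp; have Hp2 : p < size w2 by rewrite s2 -s1.
have A : (nth (false, false) w1 p).1 = (nth (false, false) w2 p).1.
  by rewrite -[LHS]andTb -Hp -posL_mem EL posL_mem Hp2.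
have B : (nth (false, false) w1 p).2 = (nth (false, false) w2 p).2.
  by rewrite -[LHS]andTb -Hp -posR_mem ER posR_mem Hp2.
by move: A B; case: (nth _ w1 p) => a1 b1; case: (nth _ w2 p) => a2 b2 /= -> ->.
Qed.

End Bij.

Lemma filter_iota_lt k l : [seq x <- iota 0 (k + l) | x < k] = iota 0 k.
Proof.
rewrite iotaD filter_cat.
have -> : [seq x <- iota 0 k | x < k] = iota 0 k.
  by apply/all_filterP/allP => x; rewrite mem_iota; lia.
have -> : [seq x <- iota (0 + k) l | x < k] = [::].
  apply/eqP; rewrite -[_ == _]negbK -has_filter; apply/hasPn => x; rewrite mem_iota; lia.
by rewrite cats0.
Qed.
Lemma filter_iota_ge k l : [seq x <- iota 0 (k + l) | k <= x] = iota k l.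
Proof.
rewrite iotaD filter_cat.
have -> : [seq x <- iota 0 k | k <= x] = [::].
  apply/eqP; rewrite -[_ == _]negbK -has_filter; apply/hasPn => x; rewrite mem_iota; lia.
by apply/all_filterP/allP => x; rewrite mem_iota; lia.
Qed.

Section Surj.
Variables k l n' : nat.

Lemma hf_surj (sigma : {ffun 'I_(k + l) -> 'I_n'.+1}) : is_qsh sigma ->
  exists w, [/\ wordP k l w, size w = n'.+1 & hf k l n' w = sigma].
Proof.
move=> Hq; have [H1 H2 H3] := (qshP sigma).1 Hq.
set F := [seq i : 'I_(k + l) <- enum 'I_(k + l) | i < k].
set G := [seq i : 'I_(k + l) <- enum 'I_(k + l) | k <= i].
have FV : map val F = iota 0 k.
  rewrite -(filter_iota_lt k l) -val_enum_ord filter_map; congr map.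
have GV : map val G = iota k l.
  rewrite -(filter_iota_ge k l) -val_enum_ord filter_map; congr map.
set A := map (fun i => val (sigma i)) F.
set B := map (fun i => val (sigma i)) G.
set w := [seq (p \in A, p \in B) | p <- iota 0 n'.+1].
have Sw : size w = n'.+1 by rewrite size_map size_iota.
have Nw : forall p, p < n'.+1 -> nth (false, false) w p = (p \in A, p \in B).
  by move=> p Hp; rewrite (nth_map 0) ?size_iota // nth_iota.
have Fsz : size F = k by rewrite -(size_map val) FV size_iota.
have Gsz : size G = l by rewrite -(size_map val) GV size_iota.
have Asz : size A = k by rewrite size_map.
have Bsz : size B = l by rewrite size_map.
have Anth : forall j (Hj : j < k + l), j < k -> nth 0 A j = val (sigma (Ordinal Hj)).
  move=> j Hj Hjk; rewrite (nth_map (Ordinal Hj)) ?Fsz //; congr (val (sigma _)).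
  by apply: val_inj; rewrite /= -(nth_map _ 0) ?Fsz // FV nth_iota.
have Bnth : forall j (Hj : k + j < k + l), j < l -> nth 0 B j = val (sigma (Ordinal Hj)).
  move=> j Hj Hjl; rewrite (nth_map (Ordinal Hj)) ?Gsz //; congr (val (sigma _)).
  by apply: val_inj; rewrite /= -(nth_map _ 0) ?Gsz // GV nth_iota.
have Asorted : sorted ltn A.
  rewrite /A sorted_map.
  apply: (@sub_in_sorted _ [pred i : 'I_(k + l) | i < k] (relpre val ltn)).
  - by move=> i j Hi Hj /= Hij; apply: H2.
  - exact: filter_all.
  - by rewrite -sorted_map FV; exact: iota_ltn_sorted.
have Bsorted : sorted ltn B.
  rewrite /B sorted_map.
  apply: (@sub_in_sorted _ [pred i : 'I_(k + l) | k <= i] (relpre val ltn)).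
  - by move=> i j Hi Hj /= Hij; apply: H3.
  - exact: filter_all.
  - by rewrite -sorted_map GV; exact: iota_ltn_sorted.
have Alt : forall p, p \in A -> p < n'.+1 by move=> p /mapP [i _ ->]; apply: ltn_ord.
have Blt : forall p, p \in B -> p < n'.+1 by move=> p /mapP [i _ ->]; apply: ltn_ord.
have PA : posL w = A.
  apply: (irr_sorted_eq ltn_trans ltnn (posL_sorted w) Asorted) => p.
  rewrite posL_mem Sw; case: (ltnP p n'.+1) => Hp; first by rewrite Nw.
  by apply/esym/negbTE/negP => /Alt; rewrite ltnNge Hp.
have PB : posR w = B.
  apply: (irr_sorted_eq ltn_trans ltnn (posR_sorted w) Bsorted) => p.
  rewrite posR_mem Sw; case: (ltnP p n'.+1) => Hp; first by rewrite Nw.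
  by apply/esym/negbTE/negP => /Blt; rewrite ltnNge Hp.
exists w; split => //.
  apply/and3P; split.
  - apply/allP => a /mapP [p Hp ->] /=; rewrite mem_iota in Hp.
    have Hp' : p < n'.+1 by move: Hp; rewrite add0n => /andP [].
    have [i Hi] := H1 (Ordinal Hp').
    case: (ltnP i k) => Hik; apply/orP; [left|right]; apply/mapP; exists i;
      rewrite ?Hi //= ?mem_filter ?Hik /=; exact: mem_index_enum.
  - apply/eqP; exact: (etrans (esym (posL_size w)) (etrans (congr1 size PA) Asz)).
  - apply/eqP; exact: (etrans (esym (posR_size w)) (etrans (congr1 size PB) Bsz)).
apply/ffunP => i; apply: val_inj; rewrite hf_val // PA PB; case: ifP => Hik.
  by rewrite (Anth i (ltn_ord i)) //; congr (val (sigma _)); apply: val_inj.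
have Hki : k <= i by rewrite leqNgt Hik.
have Hj : k + (i - k) < k + l by rewrite subnKC ?ltn_ord.
rewrite (Bnth _ Hj); last by have := ltn_ord i; lia.
by congr (val (sigma _)); apply: val_inj => /=; rewrite subnKC.
Qed.

End Surj.

Lemma count_split (T : Type) (Q : pred (seq T)) W m :
  all (fun w => size w <= m) W ->
  count Q W = \sum_(n < m.+1) count (fun w => Q w && (size w == n)) W.
Proof.
elim: W => [|w W IH] /=; first by rewrite big1.
case/andP => Hw HW; rewrite IH // big_split /=; congr (_ + _).
have Hw' : size w < m.+1 by [].
rewrite (bigD1 (Ordinal Hw')) //= eqxx andbT big1 ?addn0 // => i Hi.
rewrite (_ : (size w == i) = false) ?andbF //; apply/negbTE; apply: contra Hi => /eqP E.
by apply/eqP/val_inj; rewrite /= E.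
Qed.

Lemma sum_count (K : fieldType) (T : Type) (b : pred T) W :
  (\sum_(w <- W) ((b w)%:R : K) = (count b W)%:R)%R.
Proof. by elim: W => [|w W IH]; rewrite ?big_nil ?big_cons ?IH //= natrD. Qed.

Definition cond (P : nat -> bool) k (w : seq letter) :=
  ((nth (false, false) w 0).1 == P 0) && ((nth (false, false) w 0).2 == P k).

Section Crux.
Local Open Scope ring_scope.
Lemma crux (K : fieldType) k l (Ft Fs : seq (seq tree)) (P : nat -> bool) u :
  (0 < k)%N -> (0 < l)%N -> (forall i, i != 0%N -> i != k -> P i = false) ->
  \sum_(n < (k + l).+1)
    \sum_(sigma : {ffun 'I_(k + l) -> 'I_n} |
            is_qsh sigma && [forall i : 'I_(k + l), (val (sigma i) == 0) == P (val i)])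
      ((ladder sigma Ft Fs n 0 == u)%:R : K)
  = (count (fun w => cond P k w && (wtree w Ft Fs == u)) (words k l))%:R.
Proof.
move=> hk hl HP.
have H0 : (0 < k + l)%N by apply: leq_trans hk (leq_addr _ _).
have Hk' : (k < k + l)%N by rewrite -{1}(addn0 k) ltn_add2l.
rewrite (count_split _ (m := (k + l)%N)); last first.
  by apply/allP => w; rewrite mem_words => /wordP_size /andP [].
rewrite natr_sum; apply: eq_bigr => -[[|n'] Hn] _ /=.
  rewrite big1; last first.
    by move=> sigma _; case: (sigma (Ordinal H0)).
  rewrite (eq_in_count (a2 := pred0)) ?count_pred0 // => w.
  rewrite mem_words => /wordP_size /andP [Hs _] /=.
  by rewrite (_ : (size w == 0) = false) ?andbF //; apply/negbTE; rewrite -lt0n; apply: leq_trans hk Hs.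
set W' := [seq w <- words k l | cond P k w && (size w == n'.+1)%N].
have -> : count (fun w => (cond P k w && (wtree w Ft Fs == u)) && (size w == n'.+1)%N) (words k l)
    = count (fun w => wtree w Ft Fs == u) W'.
  by rewrite count_filter; apply: eq_count => w /=; case: (cond P k w); case: (wtree w Ft Fs == u).
rewrite -big_filter (perm_big (map (hf k l n') W')); last first.
  apply: uniq_perm.
  - by rewrite filter_uniq // index_enum_uniq.
  - rewrite map_inj_in_uniq ?filter_uniq ?words_uniq //.
    move=> w1 w2; rewrite !mem_filter !mem_words => /andP [/andP [_ /eqP s1] h1] /andP [/andP [_ /eqP s2] h2].
    exact: hf_inj.
  move=> sigma; rewrite mem_filter mem_index_enum andbT; apply/idP/mapP.
    case/andP => Hq HZ; have [w [Hw Hs Hh]] := hf_surj Hq.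
    exists w => //; rewrite mem_filter mem_words Hw Hs eqxx !andbT /cond.
    move: HZ; rewrite (Zchar H0 Hk' Hq HP) -Hh.
    by have [-> ->] := hf_head H0 Hk' hk hl Hw Hs.
  case=> w; rewrite mem_filter mem_words => /andP [/andP [Hc /eqP Hs] Hw] ->.
  have Hq := hf_qsh Hw Hs; rewrite Hq (Zchar H0 Hk' Hq HP).
  by have [-> ->] := hf_head H0 Hk' hk hl Hw Hs.
rewrite big_map -sum_count; apply: eq_big_seq => w.
rewrite mem_filter mem_words => /andP [/andP [_ /eqP Hs] Hw].
by rewrite -(ladder_hf Ft Fs Hw Hs).
Qed.
End Crux.

Lemma count_cond_cons P k (c : letter) W (X : pred (seq letter)) :
  count (preim (cons c) (fun w => cond P k w && X w)) W =
  if (c.1 == P 0) && (c.2 == P k) then count (preim (cons c) X) W else 0.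
Proof.
case: ifP => H; first by apply: eq_count => w /=; rewrite /cond /= H.
by rewrite (eq_count (a2 := pred0)) ?count_pred0 // => w /=; rewrite /cond /= H.
Qed.

Unset Implicit Arguments.
Set Strict Implicit.
Theorem mainTheorem9 (K : fieldType) (t s : tree) :
  wf t -> wf s -> t != Leaf -> s != Leaf ->
  let k := size (rforests t) in
  [/\ vec K (prec t s) = qsh_sum K t s (fun i => i == 0),
      vec K (dot t s) = qsh_sum K t s (fun i => (i == 0) || (i == k))
    & vec K (succ t s) = qsh_sum K t s (fun i => i == k)].
Proof.
case: t => // xs; case: s => // ys Ht Hs _ _ k; rewrite {}/k.
have [xn0 Hwx] := wf_Node Ht; have [yn0 Hwy] := wf_Node Hs.
have Hwl : wf (rlast xs) by apply: (allP Hwx); apply: rlast_mem.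
have Hwh : wf (head Leaf ys) by case: ys yn0 Hwy {Hs} => //= y ys _ /andP [].
set f := rinit xs; set g := behead ys.
set Ft' := rforests (rlast xs); set Fs' := lforests (head Leaf ys).
have EFt : rforests (Node xs) = f :: Ft' := rforests_Node xn0.
have EFs : lforests (Node ys) = g :: Fs' := lforests_Node yn0.
have Epr : prec (Node xs) (Node ys) =
  [seq wtree (lL :: w) (rforests (Node xs)) (lforests (Node ys)) | w <- words (size Ft') (size (lforests (Node ys)))].
  rewrite /prec /star (star_words (leqnn _) Hwl Hs) -map_comp EFt; apply: eq_map => w /=.
  by rewrite wtree_cons /= -cats1.
have Edot : dot (Node xs) (Node ys) =
  [seq wtree (lB :: w) (rforests (Node xs)) (lforests (Node ys)) | w <- words (size Ft') (size Fs')].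
  rewrite /dot /star (star_words (leqnn _) Hwl Hwh) -map_comp EFt EFs; apply: eq_map => w /=.
  by rewrite wtree_cons.
have Esu : succ (Node xs) (Node ys) =
  [seq wtree (lR :: w) (rforests (Node xs)) (lforests (Node ys)) | w <- words (size (rforests (Node xs))) (size Fs')].
  rewrite /succ /star (star_words (leqnn _) Ht Hwh) -map_comp EFs; apply: eq_map => w /=.
  by rewrite wtree_cons.
have hk : (0 < size (rforests (Node xs)))%N by rewrite EFt.
have hl : (0 < size (lforests (Node ys)))%N by rewrite EFs.
split; apply: functional_extensionality => u; rewrite /vec /qsh_sum /sigma_tree; cbv beta zeta.
- rewrite (@crux K _ _ _ _ (fun i => i == 0%N)) //; last by move=> i /negbTE.
  rewrite Epr; congr (_%:R)%R; rewrite count_map EFt EFs wordsSS !count_cat !count_map !count_cond_cons.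
  by rewrite /= ?addn0.
- rewrite (@crux K _ _ _ _ (fun i => (i == 0%N) || (i == size (rforests (Node xs))))) //; last first.
    by move=> i /negbTE -> /negbTE ->.
  rewrite Edot; congr (_%:R)%R; rewrite count_map EFt EFs wordsSS !count_cat !count_map !count_cond_cons.
  by rewrite /= ?eqxx /= ?addn0 ?add0n.
- rewrite (@crux K _ _ _ _ (fun i => i == size (rforests (Node xs)))) //; last by move=> i _ /negbTE.
  rewrite Esu; congr (_%:R)%R; rewrite count_map EFt EFs wordsSS !count_cat !count_map !count_cond_cons.
  by rewrite /= ?eqxx /= ?addn0 ?add0n.

Qed.
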